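(* Suppose that for each topological space $X$ a family $\mathbb{A}_X\subseteq\mathcal{P}(X)$ is fixed such that (a) $\mathbb{A}_X$ is an ideal; (b) if $Z\subseteq X$ then $\mathbb{A}_Z\subseteq\mathbb{A}_X$; (c) if $U\subseteq X$ is open then $\mathbb{A}_U=\{A\cap U:A\in\mathbb{A}_X\}$. If $X=\bigcup_{n<\omega}A_n$ with $A_n\in\mathbb{A}_X$ for all $n$, then $MA_{\pi(X)}(\text{countable})$ implies that $X$ is $\mathbb{A}$-separable.
   Context: $\pi(X)$ is the $\pi$-weight of $X$ (the least size of a $\pi$-base). $MA_\kappa(\text{countable})$ is Martin's Axiom for countable posets and $\kappa$ dense sets. $X$ is $\mathbb{A}$-separable if for every sequence $\{D_n:n<\omega\}$ of dense subsets of $X$ there are $A'_n\in\mathcal{P}(D_n)\cap\mathbb{A}_X$ with $\bigcup_{n<\omega}A'_n$ dense in $X$. *)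

(* Defs.v *)
From HB Require Import structures.
From mathcomp Require Import all_boot all_algebra.
From mathcomp Require Import all_classical all_reals all_analysis.
Set Implicit Arguments. Unset Strict Implicit. Unset Printing Implicit Defensive.
Local Open Scope classical_set_scope.

(* Subspaces: for Z : set X, the type [set_type Z] carries (as a canonical
   instance from mathcomp-analysis' subtype_topology.v) the subspace topology,
   i.e. the initial topology for the inclusion [set_val]. *)

Definition is_ideal (T : Type) (I : set (set T)) : Prop :=
  I set0 /\
  (forall A B, B `<=` A -> I A -> I B) /\
  (forall A B, I A -> I B -> I (A `|` B)).

Definition is_pi_base (X : topologicalType) (B : set (set X)) : Prop :=
  (forall V, B V -> open V /\ V !=set0) /\
  (forall U, open U -> U !=set0 -> exists2 V, B V & V `<=` U).

(* |I| <= pi(X): there is a pi-base B of least cardinality among all pi-bases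
   (so |B| = pi(X)) and I injects into B. *)
Definition card_le_pi_weight (I : Type) (X : topologicalType) : Prop :=
  exists B : set (set X),
    [/\ is_pi_base B,
        (forall B' : set (set X), is_pi_base B' ->
           exists f : set_type B -> set_type B', injective f) &
        exists g : I -> set_type B, injective g].

Definition is_partial_order (P : Type) (le : P -> P -> Prop) : Prop :=
  [/\ (forall p, le p p),
      (forall p q r, le p q -> le q r -> le p r) &
      (forall p q, le p q -> le q p -> p = q)].

Definition poset_dense (P : Type) (le : P -> P -> Prop) (E : set P) : Prop :=
  forall p, exists2 q, E q & le q p.

Definition poset_filter (P : Type) (le : P -> P -> Prop) (G : set P) : Prop :=
  [/\ G !=set0,
      (forall p q, G p -> le p q -> G q) &
      (forall p q, G p -> G q -> exists2 r, G r & le r p /\ le r q)].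

Definition MA_pi_weight_countable (X : topologicalType) : Prop :=
  forall (P : countType) (le : P -> P -> Prop), is_partial_order le ->
  inhabited P ->
  forall (I : Type) (E : I -> set P), card_le_pi_weight I X ->
    (forall i, poset_dense le (E i)) ->
    exists G : set P, poset_filter le G /\ forall i, G `&` E i !=set0.

Definition A_separable (A : forall X : topologicalType, set (set X))
  (X : topologicalType) : Prop :=
  forall D : nat -> set X, (forall n, dense (D n)) ->
    exists A' : nat -> set X,
      (forall n, A' n `<=` D n /\ A X (A' n)) /\ dense (\bigcup_n A' n).

Definition admissible_family (A : forall X : topologicalType, set (set X))
  : Prop :=
  (forall X : topologicalType, is_ideal (A X)) /\
  (forall (X : topologicalType) (Z : set X) (S : set (set_type Z)),
      A (set_type Z) S -> A X (set_val @` S)) /\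
  (forall (X : topologicalType) (U : set X), open U ->
     forall S : set (set_type U),
       A (set_type U) S <-> exists2 B, A X B & set_val @` S = B `&` U).

(* Main.v *)
Require Import Defs.
From HB Require Import structures.
From mathcomp Require Import all_boot all_algebra.
From mathcomp Require Import all_classical all_reals all_analysis.
Local Open Scope classical_set_scope.

Lemma min_card (T : Type) (F : set (set T)) : F !=set0 ->
  exists2 B0, F B0 & forall B, F B -> exists f : set_type B0 -> set_type B, injective f.
Proof.
move=> [C FC].
pose I := set_type F.
have i1 : I := exist _ C (mem_set FC).
pose Good (S : set (I -> T)) :=
  (forall h, S h -> forall i : I, sval i (h i)) /\
  (forall h1 h2, S h1 -> S h2 -> h1 <> h2 -> forall i, h1 i <> h2 i).
have [S [[GS1 GS2] Smax]] : exists S, Good S /\ forall B, S `<` B -> ~ Good B.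
  apply: Zorn_bigcup => G GG Gtot; split.
    by move=> h [X GX Xh] i; exact: (GG X GX).1 h Xh i.
  move=> h1 h2 [X1 GX1 Xh1] [X2 GX2 Xh2] neq i.
  have [X12|X21] := Gtot _ _ GX1 GX2.
    exact: ((GG X2 GX2).2 h1 h2 (X12 _ Xh1) Xh2 neq i).
  exact: ((GG X1 GX1).2 h1 h2 Xh1 (X21 _ Xh2) neq i).
have [i0 Hi0] : exists i0 : I, forall b, sval i0 b -> exists2 h, S h & h i0 = b.
  apply: contrapT => Hno.
  have Hall : forall i : I, exists b, sval i b /\ forall h, S h -> h i <> b.
    move=> i; apply: contrapT => Hi; apply: Hno; exists i => b ib.
    apply: contrapT => nh; apply: Hi; exists b; split => // h Sh hib.
    by apply: nh; exists h.
  have [hn Hhn] := choice Hall.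
  apply: (Smax (S `|` [set hn])).
    split; first by move=> h Sh; left.
    move=> /(_ hn (or_intror erefl)) Shn.
    by apply: ((Hhn i1).2 hn Shn).
  split.
    by move=> h [Sh|->] i; [exact: GS1 | exact: (Hhn i).1].
  move=> h1 h2 [S1|->] [S2|->] neq i.
  - exact: GS2.
  - exact: (Hhn i).2.
  - by move=> e; apply: ((Hhn i).2 h2 S2); rewrite e.
  - by [].
exists (sval i0); first by have := svalP i0; rewrite inE.
move=> B FB; pose j : I := exist _ B (mem_set FB).
have Hc : forall b : set_type (sval i0), {h | S h /\ h i0 = sval b}.
  move=> b; apply: cid; have [h Sh e] := Hi0 (sval b) (set_mem (svalP b)).
  by exists h.
exists (fun b => exist _ (sval (Hc b) j) (mem_set (GS1 _ (proj1 (svalP (Hc b))) j))).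
move=> b1 b2 /(congr1 sval) /= e.
case: (Hc b1) e => h1 [S1 e1]; case: (Hc b2) => h2 [S2 e2] /= e.
have h12 : h1 = h2.
  by apply: contrapT => neq; exact: (GS2 h1 h2 S1 S2 neq j e).
apply: val_inj; move: e1 e2 => /= <- <-; by rewrite h12.
Qed.

Lemma prefix_nth (p s : seq nat) n : (n < size p)%N -> nth 0%N (p ++ s) n = nth 0%N p n.
Proof. by move=> h; rewrite nth_cat h. Qed.

Theorem lemma5p1 (A : forall X : topologicalType, set (set X)) :
  admissible_family A ->
  forall (X : topologicalType) (An : nat -> set X),
    (forall n, A X (An n)) ->
    [set: X] = \bigcup_n An n ->
    MA_pi_weight_countable X ->
    A_separable A X.
Proof.
move=> [Aid _] X An HAn cover MA D Ddense.
have [I0 [I1 I2]] := Aid X.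
have [B0 pB0 minB0] : exists2 B0 : set (set X), is_pi_base B0 &
    forall B : set (set X), is_pi_base B -> exists f : set_type B0 -> set_type B, injective f.
  apply: (@min_card (set X) (@is_pi_base X)); exists [set V | open V /\ V !=set0]; split => //.
  by move=> U oU nU; exists U.
have card : card_le_pi_weight (set_type B0) X.
  exists B0; split => //; by exists id.
pose le (q p : seq nat) := exists s, q = p ++ s.
have po : is_partial_order le.
  split.
  - by move=> p; exists [::]; rewrite cats0.
  - by move=> p q r [s ->] [t ->]; exists (t ++ s); rewrite catA.
  - move=> p q [s e1] [t e2].
    have : size p = size p + size t + size s by rewrite {1}e1 e2 !size_cat.
    move=> /eqP; rewrite -addnA -{1}[size p]addn0 eqn_add2l eq_sym addn_eq0.
    by case: t e2 => // e2; rewrite cats0 in e2.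
pose E (V : set_type B0) (p : seq nat) :=
  exists n, (n < size p)%N /\ sval V `&` D n `&` An (nth 0%N p n) !=set0.
have Edense : forall V, poset_dense le (E V).
  move=> [V BV'] p; have BV := set_mem BV'.
  have [oV nV] := pB0.1 V BV.
  have [x [Vx Dx]] := Ddense (size p) V nV oV.
  have : [set: X] x by [].
  rewrite cover => -[k _ Akx].
  exists (p ++ [:: k]); last by exists [:: k].
  exists (size p); split; first by rewrite size_cat /= addn1.
  by exists x; rewrite nth_cat ltnn subnn.
have [G [[G0 Gup Gcomp] GE]] := MA _ le po (inhabits [::]) _ E card Edense.
have agree : forall p q n, G p -> G q -> (n < size p)%N -> (n < size q)%N ->
    nth 0%N p n = nth 0%N q n.
  move=> p q n Gp Gq np nq; have [r _ [[s ->] [t e]]] := Gcomp p q Gp Gq.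
  by rewrite -(prefix_nth p s n np) e (prefix_nth q t n nq).
exists (fun n => [set x | D n x /\ exists p, G p /\ (n < size p)%N /\ An (nth 0%N p n) x]).
split.
  move=> n; split; first by move=> x [].
  have [[p [Gp np]]|nex] := pselect (exists p, G p /\ (n < size p)%N).
    apply: (I1 (An (nth 0%N p n))) (HAn _).
    move=> x [_ [q [Gq [nq Aqx]]]].
    by rewrite (agree p q n Gp Gq np nq).
  apply: (I1 set0) I0 => x [_ [q [Gq [nq _]]]].
  by apply: nex; exists q.
move=> O nO oO.
have [V BV VO] := pB0.2 O oO nO.
have [p [Gp [n [np [x [[Vx Dx] Ax]]]]]] := GE (exist _ V (mem_set BV)).
exists x; split; first exact: VO.
exists n => //; split => //; by exists p.
Qed.
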